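(* Assume (A1). Let $\delta>0$, $\beta>0$, and $\mathcal R=\{r_1,\dots,r_m\}$ with positive integers $r_1<\dots<r_m\le t$. Suppose the event $E$ described in the context holds. Then for every $1\le k\le m-1$, $$\lVert\hat{\bm C}^{[r_k]}(t)-\hat{\bm C}^{[r_{k+1}]}(t)\rVert_\infty>\mathcal T(k)\ \Longrightarrow\ \sum_{u=t-r_{k+1}+1}^{t-1}\lVert\bm C(u)-\bm C(u+1)\rVert_\infty>\frac{A_{\delta,n,m}\,\beta}{\sqrt{r_k}}.$$
   Context: For matrices $\lVert\bm M\rVert_\infty=\max_{i,j}|M_{ij}|$. Let $\ell_1,\dots,\ell_n:\mathbb{R}^d\to\{-1,1\}$ be functions and $X_1,X_2,\dots$ random inputs with $X_k\sim D_k$; (A1): for every finite $t$, $(X_1,\dots,X_t)\sim\prod_{k=1}^tD_k$. Correlation matrix $C_{ij}(k)=\mathbb{E}_{X\sim D_k}[\ell_i(X)\ell_j(X)]$; $\bm C^{[r]}(t)=\frac1r\sum_{k=t-r+1}^t\bm C(k)$; $\hat{\bm C}^{[r]}(t)=\frac1r\sum_{k=t-r+1}^t\bm v_k\bm v_k^T$ with $\bm v_k=(\ell_1(X_k),\dots,\ell_n(X_k))^T$. Let $A_{\delta,n,m}=\sqrt{2\ln[(2m-1)n(n-1)/\delta]}$ and, for $k\le m-1$, $\mathcal T(k)=\frac{2\beta A_{\delta,n,m}}{\sqrt{r_k}}+A_{\delta,n,m}\sqrt{\frac{1-r_k/r_{k+1}}{r_k}}$. The event $E$: for all $k\le m$,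 $\lVert\bm C(t)-\hat{\bm C}^{[r_k]}(t)\rVert_\infty\le\frac{A_{\delta,n,m}}{\sqrt{r_k}}+\lVert\bm C(t)-\bm C^{[r_k]}(t)\rVert_\infty$, and for all $k\le m-1$, $\lVert\bm C^{[r_k]}(t)-\bm C^{[r_{k+1}]}(t)-\hat{\bm C}^{[r_k]}(t)+\hat{\bm C}^{[r_{k+1}]}(t)\rVert_\infty\le A_{\delta,n,m}\sqrt{\frac{1-r_k/r_{k+1}}{r_k}}$. *)

(* Defs.v *)
From HB Require Import structures.
From mathcomp Require Import all_boot all_order all_algebra.
From mathcomp Require Import all_classical all_reals all_analysis.
Set Implicit Arguments. Unset Strict Implicit. Unset Printing Implicit Defensive.
Import Order.TTheory GRing.Theory Num.Theory.
Import numFieldNormedType.Exports.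
Local Open Scope classical_set_scope.
Local Open Scope ring_scope.

Definition Rd (R : realType) (d : nat) := g_sigma_algebraType (@open 'rV[R]_d).

Definition mxnorm_inf (R : realType) (n : nat) (M : 'M[R]_n) : R :=
  \big[Num.max/0]_(i < n) \big[Num.max/0]_(j < n) `|M i j|.

Definition corr_mx (R : realType) (d n : nat) (l : 'I_n -> Rd R d -> R)
  (D : probability (Rd R d) R) : 'M[R]_n :=
  \matrix_(i, j) (\int[D]_x (l i x * l j x)).

Definition win_avg (R : realType) (n : nat) (C : nat -> 'M[R]_n) (r t : nat)
  : 'M[R]_n := (r%:R)^-1 *: \sum_(t - r + 1 <= k < t.+1) C k.

Definition outer_mx (R : realType) (d n : nat) (l : 'I_n -> Rd R d -> R)
  (x : Rd R d) : 'M[R]_n := \matrix_(i, j) (l i x * l j x).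

Definition emp_avg (R : realType) (d n : nat) (l : 'I_n -> Rd R d -> R)
  (x : nat -> Rd R d) (r t : nat) : 'M[R]_n :=
  (r%:R)^-1 *: \sum_(t - r + 1 <= k < t.+1) outer_mx l (x k).

Definition A_const (R : realType) (delta : R) (n m : nat) : R :=
  Num.sqrt (2 * ln ((2 * m%:R - 1) * n%:R * (n%:R - 1) / delta)).

Definition T_thr (R : realType) (delta beta : R) (n m : nat) (r : nat -> nat)
  (k : nat) : R :=
  2 * beta * A_const delta n m / Num.sqrt (r k)%:R
  + A_const delta n m * Num.sqrt ((1 - (r k)%:R / (r k.+1)%:R) / (r k)%:R).

(* (A1): for every finite t, (X_1,...,X_t) ~ prod_{k=1}^t D_k, i.e. the joint
   law of (X_1,...,X_t) is the product measure (stated on measurable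
   rectangles, which determine it). *)
Definition assumption_A1 (R : realType) (d : nat) (dO : measure_display)
  (Omega : measurableType dO) (P : probability Omega R)
  (X : nat -> Omega -> Rd R d) (D : nat -> probability (Rd R d) R) : Prop :=
  forall (t : nat) (B : nat -> set (Rd R d)),
    (forall k, measurable (B k)) ->
    P (\big[setI/setT]_(1 <= k < t.+1) (X k @^-1` B k))
    = (\prod_(1 <= k < t.+1) D k (B k))%E.

(* The event E (evaluated at a realisation x = (X_k(omega))_k) *)
Definition event_E (R : realType) (d n m : nat) (l : 'I_n -> Rd R d -> R)
  (C : nat -> 'M[R]_n) (x : nat -> Rd R d) (delta : R) (r : nat -> nat)
  (t : nat) : Prop :=
  (forall k, (1 <= k <= m)%N ->
     mxnorm_inf (C t - emp_avg l x (r k) t)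
     <= A_const delta n m / Num.sqrt (r k)%:R
        + mxnorm_inf (C t - win_avg C (r k) t))
  /\
  (forall k, (1 <= k <= m - 1)%N ->
     mxnorm_inf (win_avg C (r k) t - win_avg C (r k.+1) t
                 - emp_avg l x (r k) t + emp_avg l x (r k.+1) t)
     <= A_const delta n m * Num.sqrt ((1 - (r k)%:R / (r k.+1)%:R) / (r k)%:R)).

(* Main.v *)
Require Import Defs.
From HB Require Import structures.
From mathcomp Require Import all_boot all_order all_algebra.
From mathcomp Require Import all_classical all_reals all_analysis.
From mathcomp Require Import zify ring lra.
Import Order.TTheory GRing.Theory Num.Theory.
Import numFieldNormedType.Exports.
Local Open Scope classical_set_scope.
Local Open Scope ring_scope.

Lemma entry_le (R : realType) n (A : 'M[R]_n) i j : `|A i j| <= mxnorm_inf A.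
Proof.
rewrite /mxnorm_inf.
have h1 := le_bigmax 0 (fun i => \big[Num.max/0]_(j<n) `|A i j|) i.
have h2 := le_bigmax 0 (fun j => `|A i j|) j.
exact: (le_trans h2 h1).

Qed.

Arguments entry_le {R n} A i j.
Lemma norm_le (R : realType) n (A : 'M[R]_n) c :
  0 <= c -> (forall i j, `|A i j| <= c) -> mxnorm_inf A <= c.
Proof.
move=> c0 H; rewrite /mxnorm_inf.
apply: bigmax_le => // i _; apply: bigmax_le => // j _; exact: H.
Qed.

Arguments norm_le {R n} A c.
Lemma dev_bound (R : realType) (f : nat -> R) a s t : (a <= s <= t)%N ->
  `|f s - f t| <= \sum_(a <= u < t) `|f u - f u.+1|.
Proof.
elim: t s => [|t IH] s /andP[hs ht].
  have -> : s = 0%N by apply/eqP; rewrite -leqn0.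
  by rewrite subrr normr0 sumr_ge0.
case: (ltngtP s t.+1) ht => // [hlt _|-> _]; last first.
  by rewrite subrr normr0 sumr_ge0.
have hat : (a <= t)%N by apply: leq_trans hs _; rewrite -ltnS.
rewrite big_nat_recr //=.
apply: le_trans (_ : `|f s - f t| + `|f t - f t.+1| <= _).
  by rewrite -[f s - f t.+1](subrKA (f t)) ler_normD.
by rewrite lerD2r IH // hs -ltnS.
Qed.

Arguments dev_bound {R} f a s t.
Lemma avg_dev (R : realType) n (C : nat -> 'M[R]_n) r t a i j :
  (0 < r)%N -> (r <= t)%N -> (a <= t - r + 1)%N ->
  `|(win_avg C r t - C t) i j| <= \sum_(a <= u < t) mxnorm_inf (C u - C u.+1).
Proof.
move=> r0 rt ha.
set S := \sum_(a <= u < t) _.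
have HS : forall s, (t - r + 1 <= s <= t)%N -> `|C s i j - C t i j| <= S.
  move=> s /andP[h1 h2].
  have := dev_bound (fun u => C u i j) a s t.
  rewrite h2 (leq_trans ha h1) => /(_ isT) /le_trans; apply.
  apply: ler_sum => u _; have := entry_le (C u - C u.+1) i j; by rewrite !mxE.
have rN : r%:R != 0 :> R by rewrite pnatr_eq0 -lt0n.
have Hc : C t i j = (r%:R)^-1 * \sum_(t - r + 1 <= k < t.+1) C t i j.
  rewrite sumr_const_nat (_ : t.+1 - _ = r)%N; last by lia.
  by rewrite -[C t i j *+ r]mulr_natr [C t i j * _]mulrC mulKf.
rewrite /win_avg !mxE summxE Hc -mulrBr -sumrB normrM ger0_norm; last first.
  by rewrite invr_ge0 ler0n.
apply: le_trans (ler_wpM2l _ (ler_norm_sum _ _ _)) _; first by rewrite invr_ge0 ler0n.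
apply: le_trans (ler_wpM2l _ (_ : _ <= \sum_(t - r + 1 <= k < t.+1) S)) _.
- by rewrite invr_ge0 ler0n.
- apply: ler_sum_nat => s /andP[h1 h2]; apply: HS; rewrite h1 /=; by rewrite -ltnS.
rewrite sumr_const_nat (_ : t.+1 - _ = r)%N; last by lia.
by rewrite -[S *+ r]mulr_natr [S * _]mulrC mulKf.
Qed.

Theorem proposition8 (R : realType) (d n m : nat)
  (l : 'I_n -> Rd R d -> R)
  (hl_val : forall i x, l i x = 1 \/ l i x = -1)
  (hl_meas : forall i, measurable_fun setT (l i))
  (D : nat -> probability (Rd R d) R)
  (dO : measure_display) (Omega : measurableType dO) (P : probability Omega R)
  (X : nat -> Omega -> Rd R d)
  (hX_meas : forall k, measurable_fun setT (X k))
  (hA1 : assumption_A1 P X D)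
  (delta beta : R) (hdelta : 0 < delta) (hbeta : 0 < beta)
  (r : nat -> nat) (t : nat)
  (hr1 : (0 < r 1)%N)
  (hr_incr : forall k, (1 <= k < m)%N -> (r k < r k.+1)%N)
  (hrm : (r m <= t)%N)
  (omega : Omega)
  (hE : event_E m l (fun k => corr_mx l (D k)) (fun k => X k omega) delta r t) :
  forall k, (1 <= k <= m - 1)%N ->
    mxnorm_inf (emp_avg l (fun u => X u omega) (r k) t
                - emp_avg l (fun u => X u omega) (r k.+1) t)
      > T_thr delta beta n m r k ->
    \sum_(t - r k.+1 + 1 <= u < t)
        mxnorm_inf (corr_mx l (D u) - corr_mx l (D u.+1))
      > A_const delta n m * beta / Num.sqrt (r k)%:R.
Proof.
move=> k hk Hgt.
have r_mono : forall a b, (1 <= a)%N -> (a <= b)%N -> (b <= m)%N -> (r a <= r b)%N.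
  move=> a; elim=> [|b IH] ha hab hbm; first by lia.
  case: (ltngtP a b.+1) hab => // [hlt _|-> _]; last by [].
  apply: leq_trans (IH ha _ _) (ltnW (hr_incr b _)); lia.
have hkm : (1 <= k < m)%N by lia.
have rk0 : (0 < r k)%N by apply: leq_trans hr1 (r_mono 1%N k _ _ _); lia.
have rkk := hr_incr k hkm.
have rk1t : (r k.+1 <= t)%N by apply: leq_trans (r_mono k.+1 m _ _ _) hrm; lia.
set C := fun u => corr_mx l (D u).
set x := fun u => X u omega.
set A := A_const delta n m.
set S := \sum_(t - r k.+1 + 1 <= u < t) _.
have A0 : 0 <= A by exact: sqrtr_ge0.
have sq0 : 0 <= Num.sqrt (((1 - (r k)%:R / (r k.+1)%:R) / (r k)%:R) : R) by exact: sqrtr_ge0.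
have sr0 : 0 < Num.sqrt ((r k)%:R : R) by rewrite sqrtr_gt0 ltr0n.
rewrite ltNge; apply/negP => HS.
move: Hgt; rewrite ltNge => /negP; apply.
have T0 : 0 <= T_thr delta beta n m r k.
  rewrite /T_thr addr_ge0 ?mulr_ge0 //.
  exact: ltW.
apply: norm_le => // i j.
set E := win_avg C (r k) t - win_avg C (r k.+1) t - emp_avg l x (r k) t + emp_avg l x (r k.+1) t.
have key : (emp_avg l x (r k) t - emp_avg l x (r k.+1) t) i j
   = (win_avg C (r k) t - C t) i j - (win_avg C (r k.+1) t - C t) i j - E i j.
  by rewrite /E !mxE; ring.
have h1 : `|(win_avg C (r k) t - C t) i j| <= S.
  by apply: avg_dev => //; lia.
have h2 : `|(win_avg C (r k.+1) t - C t) i j| <= S.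
  by apply: avg_dev => //; lia.
have h3 : `|E i j| <= A * Num.sqrt ((1 - (r k)%:R / (r k.+1)%:R) / (r k)%:R).
  exact: le_trans (entry_le E i j) (hE.2 k hk).
rewrite key.
apply: le_trans (ler_normB _ _) _.
apply: le_trans (lerD (ler_normB _ _) h3) _.
rewrite /T_thr -/A.
have : `|(win_avg C (r k) t - C t) i j| + `|(win_avg C (r k.+1) t - C t) i j| <= 2 * (A * beta / Num.sqrt (r k)%:R).
  by move: HS; lra.
rewrite !mulrA.
lra.
Qed.
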